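(* Let $X=\Sigma_P$ be a one-sided subshift on an at most countable alphabet $S$ with transition matrix $P$, let $p:X\to\mathbb{R}$ be a function, $\mathcal{C}\subset\Sigma_P^*$ and $\eta>0$. Let $\varphi_1,\varphi_2:X\to\mathbb{R}_{>0}$ be bounded and bounded away from zero, with $-\infty<\mathcal{P}_{\varphi_i}(p,\mathcal{C})<0$ for $i=1,2$. Then \[\frac{1}{\mathcal{P}_{\varphi_1+\varphi_2}(p,\mathcal{C})}\ge\frac{1}{\mathcal{P}_{\varphi_1}(p,\mathcal{C})}+\frac{1}{\mathcal{P}_{\varphi_2}(p,\mathcal{C})}.\]
   Context: $\Sigma_P=\{x\in S^{\mathbb{N}}:p_{x_i,x_{i+1}}\ne0\ \forall i\}$ with the shift $\theta$; $\Sigma_P^*$ is the set of finite admissible words, $|w|$ the length and $[w]$ the cylinder of $w$. For $f:X\to\mathbb{R}$, $S_wf=\sup_{x\in[w]}\sum_{k=0}^{|w|-1}f\circ\theta^k(x)$. For $\varphi\ge0$, the $\varphi$-induced pressure of $p$ with respect to $\mathcal{C}$ is $\mathcal{P}_\varphi(p,\mathcal{C})=\limsup_{t\to\infty}\frac1t\log\sum_{w\in\mathcal{C},\,t-\eta<S_w\varphi\le t}\exp(S_wp)$. *)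

(* Defs.v *)
From HB Require Import structures.
From mathcomp Require Import all_boot all_order all_algebra.
From mathcomp Require Import all_classical all_reals all_analysis.
Set Implicit Arguments. Unset Strict Implicit. Unset Printing Implicit Defensive.
Import Order.TTheory GRing.Theory Num.Theory.
Local Open Scope classical_set_scope.
Local Open Scope ring_scope.

Section Shift.
Variable (R : realType) (S : countType).

(* The transition matrix is given by its admissibility pattern:
   P a b = true  iff  p_{a,b} <> 0. *)

Definition SigmaP (P : S -> S -> bool) : set (nat -> S) :=
  [set x | forall i, P (x i) (x i.+1)].

Definition shift (x : nat -> S) : nat -> S := fun n => x n.+1.

Definition admissible (P : S -> S -> bool) (w : seq S) : bool :=
  if w is a :: w' then path P a w' else false.

Definition cylinder (P : S -> S -> bool) (w : seq S) : set (nat -> S) :=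
  [set x | SigmaP P x /\ forall i, (i < size w)%N -> x i = nth (x i) w i].

Definition Sw (P : S -> S -> bool) (f : (nat -> S) -> R) (w : seq S) : \bar R :=
  ereal_sup [set (\sum_(k < size w) f (iter k shift x))%:E | x in cylinder P w].

Definition induced_sum (P : S -> S -> bool) (eta : R) (phi p : (nat -> S) -> R)
    (C : set (seq S)) (t : R) : \bar R :=
  \esum_(w in [set w | C w /\ ((t - eta)%:E < Sw P phi w)%E /\ (Sw P phi w <= t%:E)%E])
     expeR (Sw P p w).

Definition induced_pressure (P : S -> S -> bool) (eta : R) (phi p : (nat -> S) -> R)
    (C : set (seq S)) : \bar R :=
  ereal_inf [set ereal_sup [set ((t^-1)%:E * lne (induced_sum P eta phi p C t))%E
                            | t in [set t : R | T <= t /\ 0 < t]]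
            | T in [set: R]].

End Shift.

(* Main.v *)
Require Import Defs.
From HB Require Import structures.
From mathcomp Require Import all_boot all_order all_algebra.
From mathcomp Require Import all_classical all_reals all_analysis.
From mathcomp Require Import ring lra.
Import Order.TTheory GRing.Theory Num.Theory.
Local Open Scope classical_set_scope.
Local Open Scope ring_scope.

Section Helpers.
Variables (R : realType) (S : countType) (P : S -> S -> bool).
Implicit Types (f g : (nat -> S) -> R) (w : seq S).
Local Notation sh := (@Defs.shift S).

Lemma SigmaP_iter k x : SigmaP P x -> SigmaP P (iter k sh x).
Proof.
move=> Hx; elim: k => [|k IH] //=.
by move=> i; apply: IH.
Qed.

Lemma sum_le f (M : R) n x :
  (forall x, SigmaP P x -> f x <= M) -> SigmaP P x ->
  \sum_(k < n) f (iter k sh x) <= M * n%:R.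
Proof.
move=> Hf Hx.
have -> : M * n%:R = \sum_(k < n) M by rewrite sumr_const card_ord mulr_natr.
by apply: ler_sum => k _; apply: Hf; apply: SigmaP_iter.
Qed.

Lemma sum_ge f (m : R) n x :
  (forall x, SigmaP P x -> m <= f x) -> SigmaP P x ->
  m * n%:R <= \sum_(k < n) f (iter k sh x).
Proof.
move=> Hf Hx.
have -> : m * n%:R = \sum_(k < n) m by rewrite sumr_const card_ord mulr_natr.
by apply: ler_sum => k _; apply: Hf; apply: SigmaP_iter.
Qed.

Lemma Sw_ub f (M : R) w : (forall x, SigmaP P x -> f x <= M) ->
  (Sw P f w <= (M * (size w)%:R)%:E)%E.
Proof.
move=> Hf; apply: ge_ereal_sup => _ [x [Hx _] <-]; rewrite lee_fin.
exact: sum_le.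
Qed.

Lemma Sw_lb f (m : R) w x : (forall x, SigmaP P x -> m <= f x) ->
  cylinder P w x -> ((m * (size w)%:R)%:E <= Sw P f w)%E.
Proof.
move=> Hf Hx; apply: le_trans (ereal_sup_ubound _); last by exists x.
rewrite lee_fin; apply: sum_ge => //; by case: Hx.
Qed.

Lemma Sw_fin f (m M : R) w x : (forall x, SigmaP P x -> m <= f x <= M) ->
  cylinder P w x -> exists s, Sw P f w = s%:E /\ m * (size w)%:R <= s <= M * (size w)%:R.
Proof.
move=> Hf Hx.
have H1 := @Sw_ub f M w (fun y hy => proj2 (andP (Hf y hy))).
have H2 := @Sw_lb f m w x (fun y hy => proj1 (andP (Hf y hy))) Hx.
have Hfin : Sw P f w \is a fin_num.
  by rewrite fin_numE; apply/andP; split; apply/eqP => E; rewrite E in H1 H2.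
exists (fine (Sw P f w)); split; first by rewrite fineK.
by rewrite -!lee_fin fineK // H1 H2.
Qed.

Lemma Sw_cyl f w (t : R) : ((t%:E < Sw P f w)%E) -> exists x, cylinder P w x.
Proof.
move=> H; apply: contrapT => Hn.
suff : [set (\sum_(k < size w) f (iter k sh x))%:E | x in cylinder P w] = set0.
  by move=> E; move: H; rewrite /Sw E ereal_sup0.
by apply/seteqP; split => // y [x Hx _]; apply: Hn; exists x.
Qed.

Lemma Sw_mono f g w : (forall x, SigmaP P x -> f x <= g x) ->
  (Sw P f w <= Sw P g w)%E.
Proof.
move=> Hfg; apply: ge_ereal_sup => _ [x Hx <-].
apply: le_trans (ereal_sup_ubound _); last by exists x.
rewrite lee_fin; apply: ler_sum => k _; apply: Hfg; apply: SigmaP_iter; by case: Hx.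
Qed.

Lemma Sw_add f g w :
  (Sw P (fun x => (f x + g x)%R) w <= Sw P f w + Sw P g w)%E.
Proof.
apply: ge_ereal_sup => _ [x Hx <-].
rewrite big_split EFinD /=; apply: leeD; apply: ereal_sup_ubound; by exists x.
Qed.


Lemma level_exists (eta : R) n s : 0 < eta -> 0 < s -> s <= n%:R * eta ->
  exists k : 'I_n.+1, (k%:R * eta - eta < s) && (s <= k%:R * eta).
Proof.
move=> he hs; elim: n => [|n IH] hn.
  by move: hn; rewrite mul0r => /(lt_le_trans hs); rewrite ltxx.
have [hle|hlt] := leP s (n%:R * eta).
  have [k Hk] := IH hle; exists (widen_ord (leqnSn _) k) => //.
exists ord_max => /=; rewrite hn andbT.
by rewrite -natr1 mulrDl mul1r addrK.
Qed.

Definition lev (g : seq S -> \bar R) (eta : R) (k : nat) : set (seq S) :=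
  [set w | ((k%:R * eta - eta)%:E < g w)%E /\ (g w <= (k%:R * eta)%:E)%E].

Lemma esum_sub (A B : set (seq S)) (f : seq S -> \bar R) :
  A `<=` B -> (forall w, B w -> (0 <= f w)%E) ->
  (\esum_(w in A) f w <= \esum_(w in B) f w)%E.
Proof.
move=> AB f0; rewrite (esum_mkcond A) (esum_mkcond B); apply: le_esum => w _.
case: ifPn => wA; last by case: ifPn => // /set_mem /f0.
by rewrite ifT //; apply/mem_set/AB/set_mem.
Qed.

Lemma decomp (A : set (seq S)) (g : seq S -> \bar R) (f : seq S -> \bar R) (eta : R) n :
  0 < eta -> (forall w, A w -> (0 <= f w)%E) ->
  (forall w, A w -> exists s, g w = s%:E /\ 0 < s /\ s <= n%:R * eta) ->
  (\esum_(w in A) f w <= \sum_(k < n.+1) \esum_(w in A `&` lev g eta k) f w)%E.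
Proof.
move=> he f0 hg.
under eq_bigr do rewrite esum_mkcondr.
rewrite -esum_sum; last by move=> i j /f0 ? _; case: ifP.
apply: le_esum => w Aw.
have [s [gs [s0 sn]]] := hg w Aw.
have [k /andP[k1 k2]] := @level_exists eta n s he s0 sn.
rewrite (bigD1 k) //= ifT; last by apply/mem_set; rewrite /lev /= gs !lee_fin !lte_fin.
rewrite leeDl // sume_ge0 // => i _; case: ifP => //; by rewrite f0.
Qed.


Lemma key_le (t x : R) (s : \bar R) : 0 < t -> (0 <= s)%E ->
  (((t^-1)%:E * lne s <= x%:E)%E = (s <= (expR (x * t))%:E)%E).
Proof.
move=> t0; case: s => [r| |] //= r0.
- rewrite lee_fin in r0; case: ifPn => rle.
    have -> : r = 0 by apply/eqP; rewrite eq_le rle r0.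
    by rewrite gt0_muleNy ?lte_fin ?invr_gt0 // leNye lee_fin expR_ge0.
  have rpos : 0 < r by rewrite ltNge.
  rewrite -EFinM !lee_fin ler_pdivrMl // -ler_expR lnK ?posrE // mulrC //.
- by rewrite gt0_muley ?lte_fin ?invr_gt0 // !leye_eq.
Qed.

Lemma key_ge (t x : R) (s : \bar R) : 0 < t -> (0 <= s)%E ->
  ((x%:E <= (t^-1)%:E * lne s)%E = ((expR (x * t))%:E <= s)%E).
Proof.
move=> t0; case: s => [r| |] //= r0.
- rewrite lee_fin in r0; case: ifPn => rle.
    have -> : r = 0 by apply/eqP; rewrite eq_le rle r0.
    rewrite gt0_muleNy ?lte_fin ?invr_gt0 // leeNy_eq lee_fin.
    by apply/esym/negbTE; rewrite -ltNge expR_gt0.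
  have rpos : 0 < r by rewrite ltNge.
  rewrite -EFinM !lee_fin ler_pdivlMl // -ler_expR lnK ?posrE // mulrC //.
- by rewrite gt0_muley ?lte_fin ?invr_gt0 // !leey.
Qed.

Lemma key_lt (t x : R) (s : \bar R) : 0 < t -> (0 <= s)%E ->
  ((x%:E < (t^-1)%:E * lne s)%E = ((expR (x * t))%:E < s)%E).
Proof. by move=> t0 s0; rewrite !ltNge key_le. Qed.

Lemma word_facts (phi1 phi2 : (nat -> S) -> R) (m1 M1 m2 M2 : R) w x :
  (forall x, SigmaP P x -> m1 <= phi1 x <= M1) ->
  (forall x, SigmaP P x -> m2 <= phi2 x <= M2) ->
  0 <= m2 -> 0 <= m1 -> cylinder P w x ->
  exists s1 s2 s12, [/\ Sw P phi1 w = s1%:E, Sw P phi2 w = s2%:E,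
     Sw P (fun x => (phi1 x + phi2 x)%R) w = s12%:E,
     [/\ s1 <= s12, s2 <= s12 & s12 <= s1 + s2] &
     [/\ m1 * (size w)%:R <= s1 , m2 * (size w)%:R <= s2 &
     s12 <= (M1 + M2) * (size w)%:R]].
Proof.
move=> H1 H2 m20 m10 cx.
have H12 : forall x, SigmaP P x -> m1 + m2 <= phi1 x + phi2 x <= M1 + M2.
  move=> y hy; have /andP[a b] := H1 y hy; have /andP[c d] := H2 y hy.
  by rewrite lerD // lerD.
have [s1 [e1 /andP[l1 _]]] := @Sw_fin phi1 m1 M1 w x H1 cx.
have [s2 [e2 /andP[l2 _]]] := @Sw_fin phi2 m2 M2 w x H2 cx.
have [s12 [e12 /andP[_ u12]]] := @Sw_fin _ _ _ w x H12 cx.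
exists s1, s2, s12; split => //; split => //.
- rewrite -lee_fin -e1 -e12; apply: Sw_mono => y hy.
  have /andP[c _] := H2 y hy; rewrite lerDl; exact: le_trans c.
- rewrite -lee_fin -e2 -e12; apply: Sw_mono => y hy.
  have /andP[c _] := H1 y hy; rewrite lerDr; exact: le_trans c.
- by rewrite -lee_fin EFinD -e1 -e2 -e12; apply: Sw_add.
Qed.

Variables (eta : R) (C : set (seq S)).

Lemma isum_ge0 phi p t : (0 <= induced_sum P eta phi p C t)%E.
Proof. by apply: esum_ge0 => w _; rewrite expeR_ge0. Qed.

Lemma press_ub phi p x : (induced_pressure P eta phi p C < x%:E)%E ->
  exists T, forall t, T <= t -> 0 < t ->
    (induced_sum P eta phi p C t <= (expR (x * t))%:E)%E.
Proof.
move=> /ereal_inf_lt [_ [T _ <-] HT]; exists T => t Tt t0.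
rewrite -key_le // ?isum_ge0 //; apply/ltW; apply: le_lt_trans HT.
by apply: ereal_sup_ubound; exists t.
Qed.

Lemma press_lb phi p y : (y%:E < induced_pressure P eta phi p C)%E ->
  forall T, exists t, T <= t /\ 0 < t /\
    ((expR (y * t))%:E < induced_sum P eta phi p C t)%E.
Proof.
move=> H T.
have : (y%:E < ereal_sup [set ((t^-1)%:E * lne (induced_sum P eta phi p C t))%E
                            | t in [set t : R | (T <= t)%R /\ (0 < t)%R]])%E.
  apply: lt_le_trans H _; apply: ereal_inf_lbound; by exists T.
move=> /ereal_sup_gt [_ [t [Tt t0] <-] Ht]; exists t; split => //; split => //.
by rewrite -key_lt // isum_ge0.
Qed.

Lemma press_le phi p z : (exists T, forall t, T <= t -> 0 < t ->
    (induced_sum P eta phi p C t <= (expR (z * t))%:E)%E) ->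
  (induced_pressure P eta phi p C <= z%:E)%E.
Proof.
move=> [T HT]; apply: le_trans (ereal_inf_lbound _) _; first by exists T.
apply: ge_ereal_sup => _ [t [Tt t0] <-]; rewrite key_le // ?isum_ge0 //.
exact: HT.
Qed.

Lemma press_ge phi p y : (forall T, exists t, T <= t /\ 0 < t /\
    ((expR (y * t))%:E <= induced_sum P eta phi p C t)%E) ->
  (y%:E <= induced_pressure P eta phi p C)%E.
Proof.
move=> H; apply: le_ereal_inf_tmp => _ [T _ <-].
have [t [Tt [t0 Ht]]] := H T.
apply: le_trans (ereal_sup_ubound _); last by exists t.
by rewrite key_ge ?isum_ge0.
Qed.

End Helpers.

Arguments lev {R S}.

Section Real.
Variable R : realType.

Lemma minlin (x1 x2 K J : R) : x1 < 0 -> x2 < 0 ->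
  (x1 * K <= x1 * x2 / (x1 + x2) * (K + J)) \/ (x2 * J <= x1 * x2 / (x1 + x2) * (K + J)).
Proof.
move=> h1 h2.
have hs : x1 + x2 < 0 by lra.
have hs0 : x1 + x2 != 0 by rewrite lt_eqF.
have th1 : 0 < x1 / (x1 + x2) by rewrite ltr_ndivlMr // mul0r.
have th2 : 0 < x2 / (x1 + x2) by rewrite ltr_ndivlMr // mul0r.
have [hle|hlt] := lerP (x1 * K) (x2 * J).
  left; rewrite -subr_ge0.
  have -> : x1 * x2 / (x1 + x2) * (K + J) - x1 * K = x1 / (x1 + x2) * (x2 * J - x1 * K).
    by field.
  by apply: mulr_ge0; [exact: ltW | rewrite subr_ge0].
right; rewrite -subr_ge0.
have -> : x1 * x2 / (x1 + x2) * (K + J) - x2 * J = x2 / (x1 + x2) * (x1 * K - x2 * J).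
  by field.
by apply: mulr_ge0; [exact: ltW | rewrite subr_ge0 ltW].
Qed.

Lemma poly_exp (a K : R) : 0 < a -> exists T, 0 < T /\ forall t, T <= t -> K * (t + 1) ^+ 2 <= expR (a * t).
Proof.
move=> a0.
pose K' := Num.max K 0.
exists (Num.max 1 (24 * K' / a ^+ 3)); split; first by rewrite lt_max ltr01.
move=> t; rewrite ge_max => /andP[t1 tK].
have t0 : 0 <= t by lra.
have at0 : 0 <= a * t by rewrite mulr_ge0 // ltW.
have := @expR_ge1Dxn R (a * t) 2 at0.
have -> : (3`! %:R : R) = 6 by rewrite /factorial /= ; rewrite !natrM /=; ring.
move=> He; apply: le_trans He.
have KK' : K <= K' by rewrite le_max lexx.
have K'0 : 0 <= K' by rewrite le_max lexx orbT.
have a3 : 0 < a ^+ 3 by rewrite exprn_gt0.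
have h1 : 24 * K' <= t * a ^+ 3 by rewrite -ler_pdivrMr.
apply: le_trans (_ : K' * (t + 1) ^+ 2 <= _).
  by apply: ler_wpM2r => //; rewrite exprn_ge0 // addr_ge0.
have h2 : (t + 1) ^+ 2 <= 4 * t ^+ 2 by nra.
apply: le_trans (_ : K' * (4 * t ^+ 2) <= _); first exact: ler_wpM2l.
have -> : (a * t) ^+ 3 = a ^+ 3 * t ^+ 3 by rewrite exprMn.
have tt : 0 <= t ^+ 2 by rewrite exprn_ge0.
have : 24 * K' * t ^+ 2 <= t * a ^+ 3 * t ^+ 2 by rewrite ler_wpM2r.
move=> h3.
have h4 : 24 * (K' * t ^+ 2) <= a ^+ 3 * t ^+ 3.
  by rewrite mulrA; apply: le_trans h3 _; rewrite (exprS t 2); rewrite le_eqVlt; apply/orP; left; apply/eqP; ring.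
set u := a ^+ 3 * t ^+ 3 in h4 *; set v := K' * t ^+ 2 in h4.
have -> : K' * (4 * t ^+ 2) = 4 * v by rewrite /v; ring.
lra.
Qed.

Lemma arith_U (t eta m1 m2 Mt T1' T2' s1 s2 s12 sz : R) :
  0 < eta -> 0 < m1 -> 0 < m2 -> 0 < Mt -> 0 <= T1' -> 0 <= T2' ->
  eta + T1' * Mt / m1 <= t -> eta + T2' * Mt / m2 <= t ->
  t - eta < s12 -> s12 <= Mt * sz -> m1 * sz <= s1 -> m2 * sz <= s2 ->
  [/\ T1' <= s1, T2' <= s2, 0 < s1 & 0 < s2].
Proof.
move=> e0 m10 m20 Mt0 T10 T20 tc td w1 b3 b1 b2.
have A : t - eta < Mt * sz by lra.
have q : 0 <= T1' * Mt / m1.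
  by apply: divr_ge0; [apply: mulr_ge0 => //; exact: ltW | exact: ltW].
have sz0 : 0 < sz by rewrite -(pmulr_rgt0 _ Mt0); lra.
have hB1 : T1' * Mt <= m1 * (t - eta).
  have h : T1' * Mt / m1 <= t - eta by lra.
  by move: h; rewrite ler_pdivrMr // => h'; lra.
have hB2 : T2' * Mt <= m2 * (t - eta).
  have h : T2' * Mt / m2 <= t - eta by lra.
  by move: h; rewrite ler_pdivrMr // => h'; lra.
have A1 : m1 * (t - eta) <= m1 * (Mt * sz) by apply: ler_wpM2l; lra.
have A2 : m2 * (t - eta) <= m2 * (Mt * sz) by apply: ler_wpM2l; lra.
have C1 : T1' <= m1 * sz.
  rewrite -(ler_pM2r Mt0) -mulrA (mulrC sz) mulrA; lra.
have C2 : T2' <= m2 * sz.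
  rewrite -(ler_pM2r Mt0) -mulrA (mulrC sz) mulrA; lra.
have m1s : 0 < m1 * sz by rewrite mulr_gt0.
have m2s : 0 < m2 * sz by rewrite mulr_gt0.
split; lra.
Qed.

Lemma final_U (d del eta t mx nn : R) :
  0 < eta -> 0 <= t -> 0 <= nn -> nn <= t / eta + 2 -> 1 / eta <= mx -> 2 <= mx ->
  expR (- d * eta) * mx ^+ 2 * (t + 1) ^+ 2 <= expR (del * t) ->
  expR (d * (t - eta)) * nn * nn <= expR ((d + del) * t).
Proof.
move=> e0 t0 nn0 hn a1 a2 hp.
have hm : nn <= mx * (t + 1).
  move: hn; rewrite (_ : t / eta = 1 / eta * t); last by rewrite mul1r mulrC.
  set a := 1 / eta in a1 *; move=> hn; nra.
have hsq : nn * nn <= mx ^+ 2 * (t + 1) ^+ 2.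
  apply: le_trans (ler_pM nn0 nn0 hm hm) _.
  by rewrite le_eqVlt; apply/orP; left; apply/eqP; ring.
have -> : expR (d * (t - eta)) = expR (d * t) * expR (- d * eta).
  by rewrite -expRD; congr expR; ring.
have -> : expR ((d + del) * t) = expR (d * t) * expR (del * t).
  by rewrite -expRD; congr expR; ring.
rewrite -!mulrA; apply: ler_wpM2l; first exact: expR_ge0.
apply: le_trans hp; rewrite -mulrA; apply: ler_wpM2l; first exact: expR_ge0.
exact: hsq.
Qed.

End Real.

Lemma lower_part (R : realType) (S : countType) (P : S -> S -> bool)
    (p : (nat -> S) -> R) (C : set (seq S)) (eta : R)
    (phi1 phi2 : (nat -> S) -> R) (m1 M1' m2 M2' q1 q2 : R) :
  0 < eta -> 0 < m1 -> 0 < m2 -> 0 < M1' -> 0 < M2' ->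
  (forall x, SigmaP P x -> m1 <= phi1 x <= M1') ->
  (forall x, SigmaP P x -> m2 <= phi2 x <= M2') ->
  induced_pressure P eta phi1 p C = q1%:E -> q1 < 0 ->
  induced_pressure P eta phi2 p C = q2%:E -> q2 < 0 ->
  exists y : R, (y%:E <= induced_pressure P eta (fun x => (phi1 x + phi2 x)%R) p C)%E.
Proof.
move=> he m10 m20 M10 M20 H1' H2' E1 q10 E2 q20.
set phi12 := (fun x => (phi1 x + phi2 x)%R).
pose y0 := q1 - 1.
have y00 : y0 < 0 by rewrite /y0; lra.
exists (2 * y0); apply: press_ge => T.
pose K := (M1' + M2') / m1.
have K0 : 0 < K by rewrite /K divr_gt0 // addr_gt0.
pose mx := Num.max (K / eta) 2.
pose Kp := expR (- (2 * y0) * eta) * mx.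
have [T0 [T00 HT0]] := @poly_exp R (- y0) Kp (ltac:(lra)).
have hlb : (y0%:E < induced_pressure P eta phi1 p C)%E by rewrite E1 lte_fin /y0; lra.
have [t [Tt [t0 Ht]]] := @press_lb R S P eta C phi1 p y0 hlb (Num.max (Num.max T 0 + eta) T0).
move: Tt; rewrite ge_max => /andP[tT tT0].
have hTm1 : T <= Num.max T 0 by rewrite le_max lexx.
have hTm2 : 0 <= Num.max T 0 by rewrite le_max lexx orbT.
have hT : T <= t - eta by lra.
have hT' : 0 <= t - eta by lra.
pose n := (Num.trunc (K * t / eta)).+1.
have hn1 : K * t / eta < n%:R := truncnS_gt _.
have Kt0 : 0 <= K * t / eta by apply: divr_ge0; [apply: mulr_ge0; apply: ltW | apply: ltW].
have hn2 : n.+1%:R <= K * t / eta + 2.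
  rewrite /n -addn2 natrD; have := truncn_le (K * t / eta); rewrite Kt0 => h; lra.
pose W1 := [set w | C w /\ ((t - eta)%:E < Sw P phi1 w)%E /\ (Sw P phi1 w <= t%:E)%E].
pose H (k : nat) := (\esum_(w in W1 `&` lev (Sw P phi12) eta k) expeR (Sw P p w))%E.
have Hs : (induced_sum P eta phi1 p C t <= \sum_(k < n.+1) H k)%E.
  rewrite /H /W1 /induced_sum; apply: decomp => //.
    by move=> w _; apply: expeR_ge0.
  move=> w [Cw [w1 w2]].
  have [x cx] := @Sw_cyl _ _ P phi1 w (t - eta) w1.
  have [s1 [s2 [s12 [e1 e2 e12 [l1 l2 l3] [b1 b2 b3]]]]] :=
    @word_facts _ _ P phi1 phi2 m1 M1' m2 M2' w x H1' H2' (ltW m20) (ltW m10) cx.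
  exists s12; split => //.
  rewrite e1 lte_fin in w1; rewrite e1 lee_fin in w2.
  split; first by lra.
  have hsz : (size w)%:R <= t / m1 by rewrite ler_pdivlMr // mulrC; lra.
  have h3 : (M1' + M2') * (size w)%:R <= (M1' + M2') * (t / m1).
    by apply: ler_wpM2l => //; lra.
  have h4 : K * t < n%:R * eta by rewrite -ltr_pdivrMr.
  have h5 : K * t = (M1' + M2') * (t / m1) by rewrite /K mulrAC mulrA.
  lra.
have [k Hk] : exists k : 'I_n.+1, ((expR (y0 * t) / n.+1%:R)%:E < H k)%E.
  apply: contrapT => Hn.
  have : (\sum_(k < n.+1) H k <= (expR (y0 * t))%:E)%E.
    apply: le_trans (_ : \sum_(k < n.+1) (expR (y0 * t) / n.+1%:R)%:E <= _)%E.
      apply: lee_sum => k _; rewrite leNgt; apply/negP => hk; apply: Hn; by exists k.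
    by rewrite sumEFin lee_fin sumr_const card_ord -[_ *+ _]mulr_natr divfK // pnatr_eq0.
  by move=> h; have := lt_le_trans Ht (le_trans Hs h); rewrite ltxx.
have cpos : 0 < expR (y0 * t) / n.+1%:R by rewrite divr_gt0 ?expR_gt0 // ltr0n.
have [w [hw1 hw2]] : exists w, (W1 `&` lev (Sw P phi12) eta k) w.
  apply: contrapT => hn; move: Hk; rewrite /H esum1; last first.
    by move=> w' hw'; exfalso; apply: hn; exists w'.
  by rewrite lte_fin => hc; move: (lt_trans cpos hc); rewrite ltxx.
case: hw1 => Cw [w1 w2]; case: hw2 => [v1 v2].
have [x cx] := @Sw_cyl _ _ P phi1 w (t - eta) w1.
have [s1 [s2 [s12 [e1 e2 e12 [l1 l2 l3] [b1 b2 b3]]]]] :=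
  @word_facts _ _ P phi1 phi2 m1 M1' m2 M2' w x H1' H2' (ltW m20) (ltW m10) cx.
rewrite e1 lte_fin in w1; rewrite /phi12 e12 lee_fin in v2.
have hk : t - eta < k%:R * eta by lra.
exists (k%:R * eta); split; first by lra.
split; first by lra.
apply: le_trans (_ : (expR (y0 * t) / n.+1%:R)%:E <= _)%E; last first.
  apply: le_trans (ltW Hk) _; rewrite /H /W1 /induced_sum; apply: esum_sub.
    by move=> w' [[Cw' _] [a b]].
  by move=> w' _; apply: expeR_ge0.
rewrite lee_fin ler_pdivlMr ?ltr0n //.
have e1' : expR (2 * y0 * (k%:R * eta)) <= expR (2 * y0 * (t - eta)).
  by rewrite ler_expR; nra.
have e2' : expR (2 * y0 * (t - eta)) = expR (y0 * t) * (expR (- (2 * y0) * eta) * expR (y0 * t)).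
  by rewrite -!expRD; congr expR; ring.
have mxb : n.+1%:R <= mx * (t + 1) ^+ 2.
  have a1 : K / eta <= mx by rewrite le_max lexx.
  have a2 : 2 <= mx by rewrite le_max lexx orbT.
  move: hn2; rewrite (mulrAC K t) => hn2.
  set a := K / eta in a1 hn2 *; nra.
have e3 : expR (- (2 * y0) * eta) * n.+1%:R <= expR (- y0 * t).
  apply: le_trans (HT0 t tT0); rewrite /Kp -mulrA; apply: ler_wpM2l.
    exact: expR_ge0.
  exact: mxb.
have e4 : expR (- (2 * y0) * eta) * n.+1%:R * expR (y0 * t) <= 1.
  apply: le_trans (ler_wpM2r (expR_ge0 (y0 * t)) e3) _.
  by rewrite -expRD mulNr addNr expR0.
apply: le_trans (_ : expR (2 * y0 * (t - eta)) * n.+1%:R <= _).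
  by apply: ler_wpM2r.
rewrite e2' -mulrA.
have -> : expR (- (2 * y0) * eta) * expR (y0 * t) * n.+1%:R = expR (- (2 * y0) * eta) * n.+1%:R * expR (y0 * t) by ring.
rewrite -[X in _ <= X]mulr1; apply: ler_wpM2l => //; exact: expR_ge0.
Qed.

Lemma upper_part (R : realType) (S : countType) (P : S -> S -> bool)
    (p : (nat -> S) -> R) (C : set (seq S)) (eta : R)
    (phi1 phi2 : (nat -> S) -> R) (m1 M1' m2 M2' q1 q2 : R) :
  0 < eta -> 0 < m1 -> 0 < m2 -> 0 < M1' -> 0 < M2' ->
  (forall x, SigmaP P x -> m1 <= phi1 x <= M1') ->
  (forall x, SigmaP P x -> m2 <= phi2 x <= M2') ->
  induced_pressure P eta phi1 p C = q1%:E -> q1 < 0 ->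
  induced_pressure P eta phi2 p C = q2%:E -> q2 < 0 ->
  forall e, 0 < e -> (induced_pressure P eta (fun x => (phi1 x + phi2 x)%R) p C <= (q1 * q2 / (q1 + q2) + e)%:E)%E.
Proof.
move=> he m10 m20 M10 M20 H1' H2' E1 q10 E2 q20.
set phi12 := (fun x => (phi1 x + phi2 x)%R).
pose D := q1 * q2 / (q1 + q2).
have D0 : D < 0.
  have qq : 0 < q1 * q2 by nra.
  by rewrite /D pmulr_rlt0 // invr_lt0; lra.
move=> e e0.
pose lam := Num.max (1/2) (1 + e / (2 * D)).
have lam0 : 0 < lam by rewrite lt_max; apply/orP; left; lra.
have eD : e / (2 * D) < 0 by rewrite pmulr_rlt0 // invr_lt0; lra.
have lam1 : lam < 1 by rewrite gt_max; apply/andP; split; lra.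
have lamD : lam * D <= D + e / 2.
  have h : 1 + e / (2 * D) <= lam by rewrite le_max lexx orbT.
  apply: le_trans (ler_wnM2r (ltW D0) h) _.
  have D0' : D != 0 by rewrite lt_eqF.
  by rewrite (_ : (1 + e / (2 * D)) * D = D + e / 2) //; field.
pose x1 := lam * q1; pose x2 := lam * q2.
have x10 : x1 < 0 by rewrite /x1 pmulr_rlt0.
have x20 : x2 < 0 by rewrite /x2 pmulr_rlt0.
have qx1 : q1 < x1 by rewrite /x1; nra.
have qx2 : q2 < x2 by rewrite /x2; nra.
pose d := x1 * x2 / (x1 + x2).
have dD : d = lam * D.
  rewrite /d /x1 /x2 /D; field; apply/andP; split; apply/negP => /eqP; nra.
have d0 : d < 0 by rewrite dD pmulr_rlt0.
pose del := e / 2.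
have del0 : 0 < del by rewrite /del; lra.
have [T1 HT1] := @press_ub R S P eta C phi1 p x1 (ltac:(by rewrite E1 lte_fin)).
have [T2 HT2] := @press_ub R S P eta C phi2 p x2 (ltac:(by rewrite E2 lte_fin)).
apply: le_trans (_ : ((d + del)%:E <= _)%E); last by rewrite lee_fin /del -/D; lra.
apply: press_le.
pose Mt := M1' + M2'.
have Mt0 : 0 < Mt by rewrite /Mt addr_gt0.
pose mx := Num.max (1 / eta) 2.
pose Kp := expR (- d * eta) * mx ^+ 2.
have [T0 [T00 HT0]] := @poly_exp R del Kp del0.
pose T1' := Num.max T1 0; pose T2' := Num.max T2 0.
have hT1a : T1 <= T1' by rewrite le_max lexx.
have hT1b : 0 <= T1' by rewrite le_max lexx orbT.
have hT2a : T2 <= T2' by rewrite le_max lexx.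
have hT2b : 0 <= T2' by rewrite le_max lexx orbT.
exists (Num.max (Num.max (eta + 1) T0) (Num.max (eta + T1' * Mt / m1) (eta + T2' * Mt / m2))).
move=> t; rewrite !ge_max => /andP[/andP[ta tb] /andP[tc td]] t0.
pose n := (Num.trunc (t / eta)).+1.
have hn1 : t / eta < n%:R := truncnS_gt _.
have hn1' : t < n%:R * eta by rewrite -ltr_pdivrMr.
have Kt0 : 0 <= t / eta by apply: divr_ge0; apply: ltW.
have hn2 : n.+1%:R <= t / eta + 2.
  rewrite /n -addn2 natrD; have := truncn_le (t / eta); rewrite Kt0 => h; lra.
have WF : forall w, C w -> ((t - eta)%:E < Sw P phi12 w)%E -> (Sw P phi12 w <= t%:E)%E ->
    exists s1 s2 s12, [/\ Sw P phi1 w = s1%:E, Sw P phi2 w = s2%:E, Sw P phi12 w = s12%:E,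
      [/\ s1 <= s12, s2 <= s12 & s12 <= s1 + s2] &
      [/\ t - eta < s12, s12 <= t, T1' <= s1, T2' <= s2 & 0 < s1 /\ 0 < s2]].
  move=> w Cw w1 w2.
  have [x cx] := @Sw_cyl _ _ P phi12 w (t - eta) w1.
  have [s1 [s2 [s12 [e1 e2 e12 [l1 l2 l3] [b1 b2 b3]]]]] :=
    @word_facts _ _ P phi1 phi2 m1 M1' m2 M2' w x H1' H2' (ltW m20) (ltW m10) cx.
  exists s1, s2, s12; split => //.
  rewrite /phi12 e12 lte_fin in w1; rewrite /phi12 e12 lee_fin in w2.
  have [c1 c2 c3 c4] := @arith_U R t eta m1 m2 Mt T1' T2' s1 s2 s12 _ he m10 m20 Mt0 hT1b hT2b tc td w1 b3 b1 b2.
  by split.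
pose W12 := [set w | C w /\ ((t - eta)%:E < Sw P phi12 w)%E /\ (Sw P phi12 w <= t%:E)%E].
pose G (k : nat) := W12 `&` lev (Sw P phi1) eta k.
pose Gj (k j : nat) := G k `&` lev (Sw P phi2) eta j.
pose c := expR (d * (t - eta)).
have Hs1 : (induced_sum P eta phi12 p C t <=
    \sum_(k < n.+1) \esum_(w in G k) expeR (Sw P p w))%E.
  rewrite /induced_sum /G /W12; apply: decomp => //.
    by move=> w _; apply: expeR_ge0.
  move=> w [Cw [w1 w2]].
  have [s1 [s2 [s12 [e1 e2 e12 [l1 l2 l3] [a1 a2 a3 a4 [p1 p2]]]]]] := WF w Cw w1 w2.
  by exists s1; split => //; split => //; lra.
have Hs2 : forall k : nat, (\esum_(w in G k) expeR (Sw P p w) <=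
    \sum_(j < n.+1) \esum_(w in Gj k j) expeR (Sw P p w))%E.
  move=> k; rewrite /Gj; apply: decomp => //.
    by move=> w _; apply: expeR_ge0.
  move=> w [[Cw [w1 w2]] _].
  have [s1 [s2 [s12 [e1 e2 e12 [l1 l2 l3] [a1 a2 a3 a4 [p1 p2]]]]]] := WF w Cw w1 w2.
  by exists s2; split => //; split => //; lra.
have Hp : forall k j : nat, (\esum_(w in Gj k j) expeR (Sw P p w) <= c%:E)%E.
  move=> k j; have [[w hw]|hn] := pselect (exists w, Gj k j w); last first.
    rewrite esum1 ?lee_fin ?expR_ge0 // => w hw; exfalso; apply: hn; by exists w.
  case: hw => [[[Cw [w1 w2]] [k1 k2]] [j1 j2]].
  have [s1 [s2 [s12 [e1 e2 e12 [l1 l2 l3] [a1 a2 a3 a4 [p1 p2]]]]]] := WF w Cw w1 w2.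
  rewrite e1 lte_fin in k1; rewrite e1 lee_fin in k2.
  rewrite e2 lte_fin in j1; rewrite e2 lee_fin in j2.
  have hk1 : T1 <= k%:R * eta by lra.
  have hk0 : 0 < k%:R * eta by lra.
  have hj1 : T2 <= j%:R * eta by lra.
  have hj0 : 0 < j%:R * eta by lra.
  have B1 : (\esum_(w in Gj k j) expeR (Sw P p w) <= (expR (x1 * (k%:R * eta)))%:E)%E.
    apply: le_trans (HT1 _ hk1 hk0); rewrite /induced_sum; apply: esum_sub.
      by move=> w' [[[Cw' _] [a b]] _].
    by move=> w' _; apply: expeR_ge0.
  have B2 : (\esum_(w in Gj k j) expeR (Sw P p w) <= (expR (x2 * (j%:R * eta)))%:E)%E.
    apply: le_trans (HT2 _ hj1 hj0); rewrite /induced_sum; apply: esum_sub.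
      by move=> w' [[[Cw' _] _] [a b]].
    by move=> w' _; apply: expeR_ge0.
  have sumge : t - eta <= k%:R * eta + j%:R * eta by lra.
  have Hd : d * (k%:R * eta + j%:R * eta) <= d * (t - eta).
    by rewrite ler_wnM2l // ltW.
  have [m|m] := @minlin R x1 x2 (k%:R * eta) (j%:R * eta) x10 x20; rewrite -/d in m.
    by apply: le_trans B1 _; rewrite lee_fin ler_expR; lra.
  by apply: le_trans B2 _; rewrite lee_fin ler_expR; lra.
have Hsum : (induced_sum P eta phi12 p C t <= ((c *+ n.+1) *+ n.+1)%:E)%E.
  apply: le_trans Hs1 _.
  apply: le_trans (_ : \sum_(k < n.+1) (c *+ n.+1)%:E <= _)%E; last first.
    by rewrite sumEFin sumr_const card_ord.
  apply: lee_sum => k _; apply: le_trans (Hs2 k) _.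
  apply: le_trans (_ : \sum_(j < n.+1) c%:E <= _)%E.
    by apply: lee_sum => j _; exact: Hp.
  by rewrite sumEFin sumr_const card_ord.
apply: le_trans Hsum _; rewrite lee_fin -[(c *+ n.+1) *+ n.+1]mulr_natr -[c *+ n.+1]mulr_natr.
apply: (@final_U R d del eta t mx n.+1%:R he (ltW t0) (ler0n _ _) hn2).
- by rewrite le_max lexx.
- by rewrite le_max lexx orbT.
- exact: HT0.
Qed.

Theorem proposition6p7 (R : realType) (S : countType) (P : S -> S -> bool)
    (p : (nat -> S) -> R) (C : set (seq S)) (eta : R)
    (phi1 phi2 : (nat -> S) -> R) :
  (forall w, C w -> admissible P w) ->
  0 < eta ->
  (exists m M : R, 0 < m /\ forall x, SigmaP P x -> (m <= phi1 x)%R /\ (phi1 x <= M)%R) ->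
  (exists m M : R, 0 < m /\ forall x, SigmaP P x -> (m <= phi2 x)%R /\ (phi2 x <= M)%R) ->
  (-oo < induced_pressure P eta phi1 p C)%E -> (induced_pressure P eta phi1 p C < 0)%E ->
  (-oo < induced_pressure P eta phi2 p C)%E -> (induced_pressure P eta phi2 p C < 0)%E ->
  ((induced_pressure P eta phi1 p C)^-1 + (induced_pressure P eta phi2 p C)^-1
     <= (induced_pressure P eta (fun x => phi1 x + phi2 x)%R p C)^-1)%E.
Proof.
move=> _ he [m1 [M1 [m10 H1]]] [m2 [M2 [m20 H2]]] lo1 hi1 lo2 hi2.
pose M1' := Num.max M1 m1; pose M2' := Num.max M2 m2.
have H1' : forall x, SigmaP P x -> m1 <= phi1 x <= M1'.
  by move=> x hx; have [a b] := H1 x hx; rewrite a /= le_max b.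
have H2' : forall x, SigmaP P x -> m2 <= phi2 x <= M2'.
  by move=> x hx; have [a b] := H2 x hx; rewrite a /= le_max b.
have M10 : 0 < M1' by rewrite lt_max m10 orbT.
have M20 : 0 < M2' by rewrite lt_max m20 orbT.
have fin_of (Q : \bar R) : (-oo < Q)%E -> (Q < 0)%E -> exists q, Q = q%:E /\ q < 0.
  case: Q => [q| |] //= _; by rewrite lte_fin => ?; exists q.
have [q1 [E1 q10]] := fin_of _ lo1 hi1.
have [q2 [E2 q20]] := fin_of _ lo2 hi2.
have Lo := @lower_part R S P p C eta phi1 phi2 m1 M1' m2 M2' q1 q2 he m10 m20 M10 M20 H1' H2' E1 q10 E2 q20.
have Up := @upper_part R S P p C eta phi1 phi2 m1 M1' m2 M2' q1 q2 he m10 m20 M10 M20 H1' H2' E1 q10 E2 q20.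
set phi12 := (fun x => (phi1 x + phi2 x)%R) in Lo Up *.
pose D := q1 * q2 / (q1 + q2).
have D0 : D < 0.
  have qq : 0 < q1 * q2 by nra.
  by rewrite /D pmulr_rlt0 // invr_lt0; lra.
have [r [Er rD]] : exists r, induced_pressure P eta phi12 p C = r%:E /\ r <= D.
  have [y Hy] := Lo; have U1 := Up 1 ltr01.
  move: Hy U1; case E: (induced_pressure P eta phi12 p C) => [r| |] //= _ _.
  exists r; split => //; apply/ler_addgt0Pr => e e0.
  by have := Up e e0; rewrite E lee_fin.
have r0 : r < 0 by lra.
rewrite E1 E2 Er !inver !lt_eqF //= -EFinD lee_fin.
have -> : q1^-1 + q2^-1 = D^-1.
  rewrite /D; field; apply/andP; split; [|apply/andP; split]; apply/negP => /eqP; lra.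
by rewrite lef_nV2 // negrE.
Qed.
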